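(* Let $x$ and $y$ be sequences of length $n$ such that $y=\tau(x,i)$ for some $i\in\{1,\ldots,n-1\}$. For every $j\in\{1,\ldots,n\}\setminus\{i,i+1\}$: if $\overrightarrow{PD}_x[j]\notin\{j-i-1,\,j-i\}$ then $\overrightarrow{PD}_x[j]=\overrightarrow{PD}_y[j]$; and if $\overleftarrow{PD}_x[j]\notin\{i-j,\,i+1-j\}$ then $\overleftarrow{PD}_x[j]=\overleftarrow{PD}_y[j]$.
   Context: Sequences are finite sequences of pairwise distinct integers indexed from $1$. For $1\le i\le n-1$, $\tau(x,i)$ is obtained from $x$ by exchanging $x[i]$ and $x[i+1]$. The parent-distance table of $x$ is $\overrightarrow{PD}_x[k]=k-\max\{j<k : x[j]<x[k]\}$ if such $j$ exists and $0$ otherwise; the reverse parent-distance table is $\overleftarrow{PD}_x[k]=\min\{j : k<j\le n,\ x[j]<x[k]\}-k$ if such $j$ exists and $0$ otherwise. *)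

(* Defs.v *)
From mathcomp Require Import all_boot all_order all_algebra.
Set Implicit Arguments. Unset Strict Implicit. Unset Printing Implicit Defensive.
Import Order.TTheory GRing.Theory Num.Theory.

(* Sequences are seq int; positions are 1-based: x[k] = nth 0 x (k-1). *)
Definition at1 (x : seq int) (k : nat) : int := nth 0%R x k.-1.

Definition tau (x : seq int) (i : nat) : seq int :=
  set_nth 0%R (set_nth 0%R x i.-1 (at1 x i.+1)) i (at1 x i).

Definition fpd (x : seq int) (k : nat) : nat :=
  let P := fun j => (at1 x j < at1 x k)%R in
  if has P (iota 1 k.-1)
  then k - \max_(j <- iota 1 k.-1 | P j) j
  else 0.

Definition rpd (x : seq int) (k : nat) : nat :=
  let P := fun j => (at1 x j < at1 x k)%R in
  if has P (iota k.+1 (size x - k))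
  then \big[minn/size x]_(j <- iota k.+1 (size x - k) | P j) j - k
  else 0.

(* Main.v *)
Require Import Defs.
From mathcomp Require Import all_boot all_order all_algebra zify.
Import Order.TTheory GRing.Theory Num.Theory.

Lemma bigmax_spec (P : pred nat) (s : seq nat) : has P s ->
  (\max_(k <- s | P k) k) \in s /\ P (\max_(k <- s | P k) k) /\
  forall k, k \in s -> P k -> k <= \max_(k <- s | P k) k.
Proof.
elim: s => [//|a s IH] /=; rewrite big_cons.
case Pa: (P a) => /=.
- move=> _. case hs: (has P s).
  + have [m1 [m2 m3]] := IH hs.
    case: (leqP a (\max_(j <- s | P j) j)) => h.
    * split; first by rewrite inE m1 orbT.
      split=> // k; rewrite inE => /orP [/eqP->|] //. exact: m3.
    * split; first by rewrite inE eqxx.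
      split=> // k; rewrite inE => /orP [/eqP->|] // ks Pk.
      exact: leq_trans (m3 k ks Pk) (ltnW h).
  + have -> : \max_(j <- s | P j) j = 0.
      rewrite big_hasC //; by rewrite hs.
    rewrite maxn0; split; first by rewrite inE eqxx.
    split=> // k; rewrite inE => /orP [/eqP->|] // ks Pk.
    by move/hasPn: (negbT hs) => /(_ k ks); rewrite Pk.
- move=> hs. have [m1 [m2 m3]] := IH hs.
  split; first by rewrite inE m1 orbT.
  split=> // k; rewrite inE => /orP [/eqP->|]; [by rewrite Pa|exact: m3].
Qed.

Lemma bigmin_spec (P : pred nat) (s : seq nat) d : has P s ->
  (forall k, k \in s -> k <= d) ->
  (\big[minn/d]_(k <- s | P k) k) \in s /\ P (\big[minn/d]_(k <- s | P k) k) /\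
  forall k, k \in s -> P k -> \big[minn/d]_(k <- s | P k) k <= k.
Proof.
elim: s => [//|a s IH] /=; rewrite big_cons => + hd.
have hd' : forall k, k \in s -> k <= d by move=> k ks; apply: hd; rewrite inE ks orbT.
case Pa: (P a) => /=.
- move=> _. case hs: (has P s).
  + have [m1 [m2 m3]] := IH hs hd'.
    case: (leqP a (\big[minn/d]_(j <- s | P j) j)) => h.
    * split; first by rewrite inE eqxx.
      split=> // k; rewrite inE => /orP [/eqP->|] // ks Pk.
      exact: leq_trans h (m3 k ks Pk).
    * split; first by rewrite inE m1 orbT.
      split=> // k; rewrite inE => /orP [/eqP->|] //; [by move=> _; apply: ltnW|exact: m3].
  + have -> : \big[minn/d]_(j <- s | P j) j = d.
      rewrite big_hasC //; by rewrite hs.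
    rewrite (minn_idPl (hd a (mem_head _ _))); split; first by rewrite inE eqxx.
    split=> // k; rewrite inE => /orP [/eqP->|] // ks Pk.
    by move/hasPn: (negbT hs) => /(_ k ks); rewrite Pk.
- move=> hs. have [m1 [m2 m3]] := IH hs hd'.
  split; first by rewrite inE m1 orbT.
  split=> // k; rewrite inE => /orP [/eqP->|]; [by rewrite Pa|exact: m3].
Qed.

Lemma max_swap (P Q : pred nat) (s : seq nat) i :
  (forall k, k \in s -> k != i -> k != i.+1 -> P k = Q k) ->
  Q i = P i.+1 -> Q i.+1 = P i -> (i \in s) = (i.+1 \in s) ->
  (~~ has P s -> ~~ has Q s) /\
  (has P s -> \max_(k <- s | P k) k != i -> \max_(k <- s | P k) k != i.+1 ->
     has Q s /\ \max_(k <- s | Q k) k = \max_(k <- s | P k) k).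
Proof.
move=> hag hi hi1 hm; split.
- move=> /hasPn nP; apply/hasPn => k ks.
  case: (eqVneq k i) => [ki|ki]; first by subst k; rewrite hi nP // -hm.
  case: (eqVneq k i.+1) => [ki1|ki1]; first by subst k; rewrite hi1 nP // hm.
  by rewrite -hag // nP.
- move=> hP; have [m1 [m2 m3]] := @bigmax_spec P s hP.
  set M := \max_(k <- s | P k) k in m1 m2 m3 *.
  move=> nMi nMi1.
  have QM : Q M by rewrite -hag.
  have hQ : has Q s by apply/hasP; exists M.
  split=> //.
  have [n1 [n2 n3]] := @bigmax_spec Q s hQ.
  set N := \max_(k <- s | Q k) k in n1 n2 n3 *.
  apply/eqP; rewrite eqn_leq n3 // andbT.
  case: (eqVneq N i) => [ki|ki].
    rewrite ki in n1 n2 *; rewrite hi in n2.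
    by apply: leq_trans (leqnSn _) (m3 _ _ n2); rewrite -hm.
  case: (eqVneq N i.+1) => [ki1|ki1].
    rewrite ki1 in n1 n2 *; rewrite hi1 in n2.
    have : i <= M by apply: m3; rewrite // hm.
    by rewrite leq_eqVlt eq_sym (negbTE nMi).
  by apply: m3; rewrite // hag.
Qed.

Lemma min_swap (P Q : pred nat) (s : seq nat) i d :
  (forall k, k \in s -> k <= d) ->
  (forall k, k \in s -> k != i -> k != i.+1 -> P k = Q k) ->
  Q i = P i.+1 -> Q i.+1 = P i -> (i \in s) = (i.+1 \in s) ->
  (~~ has P s -> ~~ has Q s) /\
  (has P s -> \big[minn/d]_(k <- s | P k) k != i ->
     \big[minn/d]_(k <- s | P k) k != i.+1 ->
     has Q s /\ \big[minn/d]_(k <- s | Q k) k = \big[minn/d]_(k <- s | P k) k).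
Proof.
move=> hd hag hi hi1 hm; split.
- move=> /hasPn nP; apply/hasPn => k ks.
  case: (eqVneq k i) => [ki|ki]; first by subst k; rewrite hi nP // -hm.
  case: (eqVneq k i.+1) => [ki1|ki1]; first by subst k; rewrite hi1 nP // hm.
  by rewrite -hag // nP.
- move=> hP; have [m1 [m2 m3]] := @bigmin_spec P s d hP hd.
  set M := \big[minn/d]_(k <- s | P k) k in m1 m2 m3 *.
  move=> nMi nMi1.
  have QM : Q M by rewrite -hag.
  have hQ : has Q s by apply/hasP; exists M.
  split=> //.
  have [n1 [n2 n3]] := @bigmin_spec Q s d hQ hd.
  set N := \big[minn/d]_(k <- s | Q k) k in n1 n2 n3 *.
  apply/eqP; rewrite eqn_leq n3 //=.
  case: (eqVneq N i) => [ki|ki].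
    rewrite ki in n1 n2 *; rewrite hi in n2.
    have : M <= i.+1 by apply: m3; rewrite // -hm.
    by rewrite leq_eqVlt (negbTE nMi1).
  case: (eqVneq N i.+1) => [ki1|ki1].
    rewrite ki1 in n1 n2 *; rewrite hi1 in n2.
    by apply: leq_trans (m3 _ _ n2) (leqnSn _); rewrite hm.
  by apply: m3; rewrite // hag.
Qed.

Lemma at1_tau x i k : 1 <= i -> 1 <= k ->
  at1 (tau x i) k = if k == i then at1 x i.+1 else if k == i.+1 then at1 x i else at1 x k.
Proof.
case: i => // i _; case: k => // k _.
rewrite /tau /at1 /= nth_set_nth /= nth_set_nth /= !eqSS.
by case: (eqVneq k i.+1) => [->|ne] //; rewrite (gtn_eqF (ltnSn i)).
Qed.

Lemma size_tau x i : i < size x -> size (tau x i) = size x.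
Proof. move=> h; rewrite /tau !size_set_nth; lia. Qed.

Theorem lemma12 (x y : seq int) (i : nat) :
  uniq x -> y = tau x i -> 1 <= i <= (size x).-1 ->
  forall j : nat, 1 <= j <= size x -> j != i -> j != i.+1 ->
    (~ ((Posz (fpd x j) = (Posz j - Posz i - 1)%R) \/
        (Posz (fpd x j) = (Posz j - Posz i)%R)) ->
       fpd x j = fpd y j) /\
    (~ ((Posz (rpd x j) = (Posz i - Posz j)%R) \/
        (Posz (rpd x j) = (Posz i.+1 - Posz j)%R)) ->
       rpd x j = rpd y j).
Proof.
move=> _ -> /andP [i1 isz] j /andP [j1 jsz] ji ji1.
have isz' : i < size x by lia.
have hyj : at1 (tau x i) j = at1 x j by rewrite at1_tau // (negbTE ji) (negbTE ji1).
have hag : forall k, 1 <= k -> k != i -> k != i.+1 -> at1 (tau x i) k = at1 x k.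
  by move=> k k1 ki ki1; rewrite at1_tau // (negbTE ki) (negbTE ki1).
split.
- move=> hn; rewrite /fpd hyj.
  pose P := fun k => (at1 x k < at1 x j)%R.
  pose Q := fun k => (at1 (tau x i) k < at1 x j)%R.
  have a1 : forall k, k \in iota 1 j.-1 -> k != i -> k != i.+1 -> P k = Q k.
    by move=> k; rewrite mem_iota => /andP [k1 _] ki ki1; rewrite /P /Q hag.
  have a2 : Q i = P i.+1 by rewrite /P /Q at1_tau // eqxx.
  have a3 : Q i.+1 = P i by rewrite /P /Q at1_tau // (gtn_eqF (ltnSn i)) eqxx.
  have a4 : (i \in iota 1 j.-1) = (i.+1 \in iota 1 j.-1).
    rewrite !mem_iota; apply/idP/idP; lia.
  have [h1 h2] := @max_swap P Q _ i a1 a2 a3 a4.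
  rewrite /P /Q /= in h1 h2.
  case hP: (has _ (iota 1 j.-1)); last by rewrite (negbTE (h1 (negbT hP))).
  have [m1 [_ m3]] := @bigmax_spec _ _ hP.
  move: m1; rewrite mem_iota => /andP [_ mj].
  have nMi : \max_(k <- iota 1 j.-1 | (at1 x k < at1 x j)%R) k != i.
    apply/eqP => e; apply: hn; right; rewrite /fpd hP e; lia.
  have nMi1 : \max_(k <- iota 1 j.-1 | (at1 x k < at1 x j)%R) k != i.+1.
    apply/eqP => e; apply: hn; left; rewrite /fpd hP e; lia.
  have [hQ eM] := h2 hP nMi nMi1.
  by rewrite hQ eM.
- move=> hn; rewrite /rpd hyj size_tau //.
  pose P := fun k => (at1 x k < at1 x j)%R.
  pose Q := fun k => (at1 (tau x i) k < at1 x j)%R.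
  have a0 : forall k, k \in iota j.+1 (size x - j) -> k <= size x.
    by move=> k; rewrite mem_iota; lia.
  have a1 : forall k, k \in iota j.+1 (size x - j) -> k != i -> k != i.+1 -> P k = Q k.
    by move=> k; rewrite mem_iota => /andP [k1 _] ki ki1; rewrite /P /Q hag //; lia.
  have a2 : Q i = P i.+1 by rewrite /P /Q at1_tau // eqxx.
  have a3 : Q i.+1 = P i by rewrite /P /Q at1_tau // (gtn_eqF (ltnSn i)) eqxx.
  have a4 : (i \in iota j.+1 (size x - j)) = (i.+1 \in iota j.+1 (size x - j)).
    rewrite !mem_iota; apply/idP/idP; lia.
  have [h1 h2] := @min_swap P Q _ i _ a0 a1 a2 a3 a4.
  rewrite /P /Q /= in h1 h2.
  case hP: (has _ (iota j.+1 (size x - j))); last by rewrite (negbTE (h1 (negbT hP))).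
  have [m1 [_ m3]] := @bigmin_spec _ _ _ hP a0.
  move: m1; rewrite mem_iota => /andP [mj _].
  have nMi : \big[minn/size x]_(k <- iota j.+1 (size x - j) | (at1 x k < at1 x j)%R) k != i.
    apply/eqP => e; apply: hn; left; rewrite /rpd hP e; lia.
  have nMi1 : \big[minn/size x]_(k <- iota j.+1 (size x - j) | (at1 x k < at1 x j)%R) k != i.+1.
    apply/eqP => e; apply: hn; right; rewrite /rpd hP e; lia.
  have [hQ eM] := h2 hP nMi nMi1.
  by rewrite hQ eM.
Qed.
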